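(* Let $(S,M)$ be a surface with marked points and empty boundary, and let $T$ be an ideal triangulation of $(S,M)$ such that at each puncture $p\in M$ there are at least three arcs of $T$ incident to $p$ (an arc starting and ending at the same puncture counted twice). Let $Q$ be the adjacency quiver of $T$, with vertex set $Q_0$ and arrow set $Q_1$. Then: (a) $Q$ is connected and has no loops or $2$-cycles; (b) for every $i\in Q_0$ there are exactly two arrows starting at $i$ and exactly two arrows ending at $i$; (c) there are bijections $f,g:Q_1\to Q_1$ such that for every $\alpha\in Q_1$ the set $\{f(\alpha),g(\alpha)\}$ consists of the two arrows that start at the vertex at which $\alpha$ ends, and $f^3$ is the identity on $Q_1$.
   Context: A surface with marked points and empty boundary is a pair $(S,M)$ with $S$ a compact, connected, oriented surface without boundary and $M\subset S$ a finite non-empty set of punctures. The adjacency quiver $Q$ of $T$ has the arcs of $T$ as vertices, and for each puncture $p$ and each pair of arcs $i,j$ incident to $p$ such that $j$ immediately follows $i$ in the counterclockwise order around $p$, an arrow $i\to j$ (one arrow per such occurrence). *)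

(* Defs.v *)
From mathcomp Require Import all_boot all_fingroup.
Set Implicit Arguments. Unset Strict Implicit. Unset Printing Implicit Defensive.

(* Combinatorial model of an ideal triangulation T of a surface with marked
   points and empty boundary (S,M), as an oriented combinatorial map:
   - D      : the finite set of darts (half-arcs: an arc together with one of
              its two ends); an arc with both ends at the same puncture gives
              two darts at that puncture.
   - a      : the involution exchanging the two ends of an arc (no fixed points).
   - s      : the rotation sending a dart at a puncture p to the next dart at p
              in the counterclockwise order around p (the orientation of S).
   Punctures = cycles of s, arcs = orbits of a, triangles = cycles of s \o a. *)

Section Tri.
Variable D : finType.

Definition ideal_triangulation_map (s a : {perm D}) : Prop :=
  [/\ (exists d : D, True),
      (forall d, a (a d) = d /\ a d != d),
      (forall d, s (a (s (a (s (a d))))) = d /\ s (a d) != d) &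
      (forall d e, connect (fun x y => (y == s x) || (y == a x)) d e)].

Definition at_least_three_arcs_at_each_puncture (s : {perm D}) : Prop :=
  forall d, s d != d /\ s (s d) != d.

Definition arc (a : {perm D}) (d : D) : {set D} := [set d; a d].

(* Adjacency quiver: vertices Q0 = arcs of T;
   arrows Q1 = D : the dart d at puncture p gives the arrow
   arc d -> arc (s d), from an arc to the arc immediately following it
   counterclockwise around p (one arrow per occurrence). *)
Definition adjQ0 (a : {perm D}) : {set {set D}} := [set arc a d | d : D].
Definition adjQ1 : finType := D.
Definition adj_src (a : {perm D}) (x : adjQ1) : {set D} := arc a x.
Definition adj_tgt (s a : {perm D}) (x : adjQ1) : {set D} := arc a (s x).

Definition adj_undirected (s a : {perm D}) : rel {set D} :=
  fun i j => [exists x : adjQ1,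
    ((adj_src a x == i) && (adj_tgt s a x == j)) ||
    ((adj_src a x == j) && (adj_tgt s a x == i))].

Definition quiver_connected (s a : {perm D}) : Prop :=
  forall i j, i \in adjQ0 a -> j \in adjQ0 a -> connect (adj_undirected s a) i j.

Definition quiver_no_loops (s a : {perm D}) : Prop :=
  forall x : adjQ1, adj_src a x != adj_tgt s a x.

Definition quiver_no_2cycles (s a : {perm D}) : Prop :=
  forall x y : adjQ1,
    ~ (adj_src a x = adj_tgt s a y /\ adj_tgt s a x = adj_src a y).

End Tri.

(* Main.v *)
Require Import Defs.
From mathcomp Require Import all_boot all_fingroup.

Set Implicit Arguments. Unset Strict Implicit. Unset Printing Implicit Defensive.

Lemma arcE (D : finType) (a : {perm D}) (d e : D) :
  (forall x, a (a x) = x) ->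
  (Defs.arc a d == Defs.arc a e) = (d == e) || (d == a e).
Proof.
move=> aa; rewrite /Defs.arc; apply/idP/idP.
- move=> /eqP H; have : d \in [set d; a d] by rewrite !inE eqxx.
  by rewrite H !inE.
- by case/orP=> /eqP ->; rewrite ?aa // setUC.
Qed.

Lemma permEq (D : finType) (s : {perm D}) x d : (s x == d) = (x == (s^-1)%g d).
Proof. by apply/eqP/eqP => [<-|->]; rewrite ?permK ?permKV. Qed.

Theorem proposition2p2 (D : finType) (s a : {perm D}) :
  ideal_triangulation_map s a ->
  at_least_three_arcs_at_each_puncture s ->
  (* (a) *)
  [/\ quiver_connected s a, quiver_no_loops s a & quiver_no_2cycles s a] /\
  (* (b) *)
  (forall i, i \in adjQ0 a ->
     #|[set x : adjQ1 D | adj_src a x == i]| = 2 /\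
     #|[set x : adjQ1 D | adj_tgt s a x == i]| = 2) /\
  (* (c) *)
  (exists f g : {perm adjQ1 D},
     (forall x : adjQ1 D,
        f x != g x /\
        [set f x; g x] = [set y : adjQ1 D | adj_src a y == adj_tgt s a x]) /\
     (forall x : adjQ1 D, f (f (f x)) = x)).
Proof.
case=> _ Ha Hf Hc H3.
have aa x : a (a x) = x by case: (Ha x).
have an x : a x != x by case: (Ha x).
have phi3 x : s (a (s (a (s (a x))))) = x by case: (Hf x).
have phin x : s (a x) != x by case: (Hf x).
have sn x : s x != x by case: (H3 x).
have ssn x : s (s x) != x by case: (H3 x).
have key y : s (s y) != a y.
  apply/eqP => E.
  have := phi3 (a (s y)); rewrite aa E aa => E3.
  by move: (sn (a (s y))); rewrite E3 eqxx.
have arcE' d e : (Defs.arc a d == Defs.arc a e) = (d == e) || (d == a e) by apply: arcE.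
split; [split|split].
- move=> i j /imsetP[d _ ->] /imsetP[e _ ->].
  have /connectP[p pth ->] := Hc d e.
  elim: p d pth => [|y p IH] d //= /andP[Hy /IH]; apply: connect_trans.
  case/orP: Hy => /eqP ->.
    apply: connect1; apply/existsP; exists d; by rewrite /adj_src /adj_tgt !eqxx.
  rewrite (_ : Defs.arc a (a d) = Defs.arc a d) //; apply/eqP.
  by rewrite arcE' eqxx orbT.
- move=> x; rewrite /adj_src /adj_tgt arcE' negb_or eq_sym sn /=.
  apply/eqP => E; move: (phin (a x)); by rewrite aa {2}E aa eqxx.
- move=> x y [] /eqP; rewrite arcE' => H1 /eqP; rewrite arcE' => H2.
  case/orP: H1 => /eqP Ex; case/orP: H2 => /eqP Ey.
  + by move: (ssn y); rewrite -Ex Ey eqxx.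
  + by move: (key y); rewrite -Ex Ey eqxx.
  + have Ew : s (s x) = a x by rewrite Ey Ex aa.
    by move: (key x); rewrite Ew eqxx.
  + have F1 : s (a (s y)) = a y by rewrite -Ex.
    have E3 := phi3 (s y); rewrite F1 aa F1 in E3.
    by move: (phin (s y)); rewrite -{2}E3 F1 eqxx.
- move=> i /imsetP[d _ ->]; split.
    rewrite (_ : [set x | _] = [set d; a d]); first by rewrite cards2 eq_sym an.
    by apply/setP => x; rewrite !inE /adj_src arcE'.
  rewrite (_ : [set x | _] = [set (s^-1)%g d; (s^-1)%g (a d)]).
    by rewrite cards2 (inj_eq (@perm_inj _ _)) eq_sym an.
  by apply/setP => x; rewrite !inE /adj_tgt arcE' !permEq.
- exists (s * a)%g, s; split => x; rewrite ?permM.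
    split; first by rewrite an.
    by apply/setP => y; rewrite !inE /adj_src /adj_tgt arcE' orbC.
  move: (phi3 (a x)); rewrite aa => E; by rewrite E aa.
Qed.
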